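(* Let $k$ be a field, $n\ge 2$, and let $Q$ be the $n$-Kronecker quiver. Let $\mathcal F=\{(x,y)\in\mathbb N^2 : \tfrac{1}{n-1}x<y\le (n-1)x\}$. For every $(x,y)\in\mathcal F$ there are at least $n$ isomorphism classes of cover-thin $kQ$-modules $N$ with dimension vector $(x,y)$.
   Context: The $n$-Kronecker quiver $Q$ has two vertices, a source $1$ and a sink $2$, and $n$ arrows $\alpha_1,\dots,\alpha_n\colon 1\to 2$; a finite-dimensional $kQ$-module $N$ is a representation with spaces $N_1,N_2$ and maps $N_{\alpha_i}\colon N_1\to N_2$, with dimension vector $(\dim N_1,\dim N_2)$. The universal covering $\widetilde Q$ of $Q$ is the $n$-regular tree (every vertex has exactly $n$ neighbours) with bipartite orientation (every vertex is a sink or a source), together with the covering map to $Q$ sending sources to $1$, sinks to $2$, and labelling each arrow by some $\alpha_i$ such that at every vertex the $n$ incident arrows carry the $n$ distinct labels $\alpha_1,\dots,\alpha_n$. The push-down functor $\pi\colon \operatorname{mod}k\widetilde Q\to\operatorname{mod}kQ$ sends a finite-dimensional representation $M$ of $\widetilde Q$ to the $kQ$-module with $\pi(M)_1=\bigoplus_{v\text{ source}}M_v$, $\pi(M)_2=\bigoplus_{v\text{ sink}}M_v$, and $\pi(M)_{\alpha_i}$ the sum of the maps $M_\beta$ over all arrows $\beta$ of $\widetilde Q$ labelled $\alpha_i$. An indecomposable representation is thin if each of its vector spaces has dimension $0$ or $1$. A $kQ$-module is cover-thin if it is isomorphic to $\pi(M)$ for some thin indecomposable representation $M$ of $\widetilde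 Q$. Here $\mathbb N$ denotes the positive integers. *)

(* Defs.v *)
From mathcomp Require Import all_boot all_order all_algebra.
Set Implicit Arguments. Unset Strict Implicit. Unset Printing Implicit Defensive.
Import GRing.Theory.
Local Open Scope ring_scope.

(* A finite-dimensional kQ-module N: spaces N_1 = k^d1, N_2 = k^d2 and, for each
   arrow alpha_i (i : 'I_n), a linear map N_1 -> N_2 given as a matrix
   'M_(d1,d2) acting on row vectors (u |-> u *m mapQ i). *)
Record kQmod (k : fieldType) (n : nat) := KQmod {
  d1 : nat;
  d2 : nat;
  mapQ : 'I_n -> 'M[k]_(d1, d2) }.

Definition kQiso (k : fieldType) (n : nat) (N N' : kQmod k n) : Prop :=
  exists (P : 'M[k]_(d1 N, d1 N')) (P' : 'M[k]_(d1 N', d1 N))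
         (R : 'M[k]_(d2 N, d2 N')) (R' : 'M[k]_(d2 N', d2 N)),
    [/\ P *m P' = 1%:M, P' *m P = 1%:M, R *m R' = 1%:M, R' *m R = 1%:M &
        forall i, mapQ N i *m R = P *m mapQ N' i].

(* Vertices: reduced words w = [:: i_1; ...; i_m] in 'I_n (consecutive letters
   distinct), recording the labels of the path from the root (a source). *)
Definition reduced (n : nat) (w : seq 'I_n) : bool :=
  sorted (fun a b : 'I_n => a != b) w.

Definition tsource (n : nat) (w : seq 'I_n) : bool := ~~ odd (size w).
Definition tsink (n : nat) (w : seq 'I_n) : bool := odd (size w).

Definition tarrow (n : nat) (i : 'I_n) (v w : seq 'I_n) : bool :=
  [&& reduced v, reduced w &
      (tsource v && (w == rcons v i)) || (tsink w && (v == rcons w i))].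

(* A thin finite-dimensional representation M of the tree: a finite set S of
   vertices (duplicate-free list of reduced words) with M_v = k for v in S and
   M_v = 0 otherwise; for an arrow beta : v -> w labelled alpha_i with
   v, w in S the map M_beta : k -> k is multiplication by c i v w (maps with an
   endpoint outside S are zero maps between/into 0-spaces). *)
Definition thin_ok (n : nat) (S : seq (seq 'I_n)) : bool :=
  uniq S && all (@reduced n) S.

Definition thin_endo (k : fieldType) (n : nat) (S : seq (seq 'I_n))
    (c : 'I_n -> seq 'I_n -> seq 'I_n -> k) (f : seq 'I_n -> k) : Prop :=
  forall i v w, v \in S -> w \in S -> tarrow i v w ->
    f w * c i v w = c i v w * f v.

Definition thin_indec (k : fieldType) (n : nat) (S : seq (seq 'I_n))
    (c : 'I_n -> seq 'I_n -> seq 'I_n -> k) : Prop :=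
  S != [::] /\
  forall f, thin_endo S c f -> (forall v, v \in S -> f v * f v = f v) ->
    (forall v, v \in S -> f v = 0) \/ (forall v, v \in S -> f v = 1).

Definition srcs (n : nat) (S : seq (seq 'I_n)) := [seq v <- S | tsource v].
Definition snks (n : nat) (S : seq (seq 'I_n)) := [seq v <- S | tsink v].

(* pi(M)_1 = (+)_{v source} M_v has basis srcs S, pi(M)_2 has basis snks S;
   pi(M)_{alpha_i} is the sum of the maps M_beta over arrows beta labelled
   alpha_i. *)
Definition pushdown (k : fieldType) (n : nat) (S : seq (seq 'I_n))
    (c : 'I_n -> seq 'I_n -> seq 'I_n -> k) : kQmod k n :=
  @KQmod k n (size (srcs S)) (size (snks S))
    (fun i => \matrix_(p < size (srcs S), q < size (snks S))
       (if tarrow i (nth [::] (srcs S) p) (nth [::] (snks S) q)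
        then c i (nth [::] (srcs S) p) (nth [::] (snks S) q) else 0)).

Definition cover_thin (k : fieldType) (n : nat) (N : kQmod k n) : Prop :=
  exists (S : seq (seq 'I_n)) (c : 'I_n -> seq 'I_n -> seq 'I_n -> k),
    [/\ thin_ok S, thin_indec S c & kQiso N (pushdown S c)].

(* Main.v *)
Require Import Defs.
From mathcomp Require Import all_boot all_order all_algebra.
From mathcomp Require Import zify.
Set Implicit Arguments. Unset Strict Implicit. Unset Printing Implicit Defensive.
Import GRing.Theory.
Local Open Scope ring_scope.

Section Mx.
Variable F : fieldType.

Lemma pivot_rank m n (A : 'M[F]_(m, n)) :
  (forall p : 'I_m, exists q : 'I_n, forall p', A p' q = (p' == p)%:R) ->
  \rank A = m.
Proof.
move=> /fin_all_exists [q Hq].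
apply/eqP; change (row_free A); apply/row_freeP.
exists (\matrix_(j, p) ((j == q p)%:R : F)).
apply/matrixP => p' p; rewrite !mxE.
rewrite (bigD1 (q p)) //= mxE eqxx mulr1 Hq big1 ?addr0.
  by rewrite eq_sym.
by move=> j /negbTE Hj; rewrite mxE Hj mulr0.
Qed.

Lemma zero_row_rank m n (A : 'M[F]_(m, n)) (p : 'I_m) :
  (forall q, A p q = 0) -> (\rank A < m)%N.
Proof.
move=> H; rewrite ltn_neqAle rank_leq_row andbT.
apply/negP => Hf0; have Hf : row_free A := Hf0.
have : ((delta_mx 0 p : 'rV[F]_m) *m A == 0) = ((delta_mx 0 p : 'rV[F]_m) == 0).
  exact: mulmx_free_eq0.
rewrite -rowE.
have -> : row p A = 0 by apply/matrixP => i j; rewrite !mxE H.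
rewrite eqxx => /esym/eqP/matrixP/(_ 0 p); rewrite !mxE !eqxx /=.
by move/eqP; rewrite oner_eq0.
Qed.

Lemma rank_iso m1 m2 n1 n2 (A : 'M[F]_(m1, n1)) (B : 'M[F]_(m2, n2))
   P P' R R' :
  P *m P' = 1%:M -> P' *m P = 1%:M -> R *m R' = 1%:M -> R' *m R = 1%:M ->
  A *m R = P *m B -> \rank A = \rank B.
Proof.
move=> _ HP' HR _ E.
apply/eqP; rewrite eqn_leq; apply/andP; split.
  have -> : A = A *m R *m R' by rewrite -mulmxA HR mulmx1.
  rewrite E; apply: leq_trans (mxrankM_maxl _ _) _; exact: mxrankM_maxr.
have -> : B = P' *m (P *m B) by rewrite mulmxA HP' mul1mx.
rewrite -E; apply: leq_trans (mxrankM_maxr _ _) _; exact: mxrankM_maxl.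
Qed.
End Mx.

Lemma kQiso_rank (k : fieldType) n (N N' : kQmod k n) i :
  kQiso N N' -> \rank (mapQ N i) = \rank (mapQ N' i).
Proof.
case=> P [P'] [R] [R'] [h1 h2 h3 h4 h5]; exact: rank_iso h1 h2 h3 h4 (h5 i).
Qed.

Lemma kQiso_refl (k : fieldType) n (N : kQmod k n) : kQiso N N.
Proof.
exists 1%:M; exists 1%:M; exists 1%:M; exists 1%:M; split; rewrite ?mulmx1 //.
move=> i; by rewrite mulmx1 mul1mx.
Qed.


Section Tree.
Variable n : nat.
Implicit Types (v w : seq 'I_n) (i : 'I_n).

Lemma reduced_rcons2 (s : seq 'I_n) a y :
  reduced (rcons (rcons s a) y) = reduced (rcons s a) && (a != y).
Proof.
case: s => [|z s] //=; rewrite /reduced /= ?andbT //.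
by rewrite rcons_path last_rcons.
Qed.

Lemma tarrowE i v w : tarrow i v w ->
  [/\ reduced v, reduced w &
    (tsource v /\ w = rcons v i) \/ (tsink w /\ v = rcons w i)].
Proof.
case/and3P=> rv rw /orP[/andP[s /eqP e]|/andP[s /eqP e]]; split => //; by [left|right].
Qed.

Lemma not_red2 (s : seq 'I_n) a : ~~ reduced (rcons (rcons s a) a).
Proof. by rewrite reduced_rcons2 eqxx andbF. Qed.

Lemma tarrow_uniq_src i v v' w : tarrow i v w -> tarrow i v' w -> v = v'.
Proof.
case/tarrowE=> rv _ [[_ e1]|[_ e1]]; case/tarrowE=> rv' _ [[_ e2]|[_ e2]].
- by rewrite e1 in e2; case: (rcons_inj e2).
- by move: rv'; rewrite e2 e1 (negbTE (not_red2 _ _)).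
- by move: rv; rewrite e1 e2 (negbTE (not_red2 _ _)).
- by rewrite e1 e2.
Qed.

Lemma tarrow_uniq_snk i v w w' : tarrow i v w -> tarrow i v w' -> w = w'.
Proof.
case/tarrowE=> _ rw [[_ e1]|[_ e1]]; case/tarrowE=> _ rw' [[_ e2]|[_ e2]].
- by rewrite e1 e2.
- by move: rw; rewrite e1 e2 (negbTE (not_red2 _ _)).
- by move: rw'; rewrite e2 e1 (negbTE (not_red2 _ _)).
- by rewrite e1 in e2; case: (rcons_inj e2).
Qed.

Variable k : fieldType.
Definition c1 : 'I_n -> seq 'I_n -> seq 'I_n -> k := fun _ _ _ => 1.

Lemma pushE (S : seq (seq 'I_n)) i p q :
  mapQ (pushdown S c1) i p q =
  if tarrow i (nth [::] (srcs S) p) (nth [::] (snks S) q) then 1 else 0.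
Proof. by rewrite /= mxE. Qed.

Lemma rowfull_rank (S : seq (seq 'I_n)) i : uniq S ->
  (forall v, v \in srcs S -> exists2 w, w \in snks S & tarrow i v w) ->
  \rank (mapQ (pushdown S c1) i) = size (srcs S).
Proof.
move=> uS H; apply: pivot_rank => p.
have vin : nth [::] (srcs S) p \in srcs S by rewrite mem_nth.
case: (H _ vin) => w win tw.
have iw : (index w (snks S) < size (snks S))%N by rewrite index_mem.
exists (Ordinal iw) => p'.
rewrite pushE /= nth_index //.
case: eqP => [->|ne]; first by rewrite tw.
case: ifP => // t'; exfalso; apply: ne; apply: val_inj => /=.
have := tarrow_uniq_src t' tw.
move/eqP; rewrite nth_uniq //; first by move/eqP.
by rewrite filter_uniq.
Qed.

Lemma rownotfull_rank (S : seq (seq 'I_n)) i :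
  (exists2 v, v \in srcs S & forall w, w \in snks S -> ~~ tarrow i v w) ->
  (\rank (mapQ (pushdown S c1) i) < size (srcs S))%N.
Proof.
case=> v vin H.
have iv : (index v (srcs S) < size (srcs S))%N by rewrite index_mem.
apply: (@zero_row_rank _ _ _ _ (Ordinal iv)) => q.
rewrite pushE /= nth_index // (negbTE (H _ _)) //; exact: mem_nth.
Qed.

Lemma colfull_rank (S : seq (seq 'I_n)) i : uniq S ->
  (forall w, w \in snks S -> exists2 v, v \in srcs S & tarrow i v w) ->
  \rank (mapQ (pushdown S c1) i) = size (snks S).
Proof.
move=> uS H; rewrite -mxrank_tr; apply: pivot_rank => p.
have win : nth [::] (snks S) p \in snks S by rewrite mem_nth.
case: (H _ win) => v vin tv.
have iv : (index v (srcs S) < size (srcs S))%N by rewrite index_mem.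
exists (Ordinal iv) => p'.
rewrite mxE pushE /= nth_index //.
case: eqP => [->|ne]; first by rewrite tv.
case: ifP => // t'; exfalso; apply: ne; apply: val_inj => /=.
have := tarrow_uniq_snk tv t'.
move/eqP; rewrite eq_sym nth_uniq //; first by move/eqP.
by rewrite filter_uniq.
Qed.

Lemma colnotfull_rank (S : seq (seq 'I_n)) i :
  (exists2 w, w \in snks S & forall v, v \in srcs S -> ~~ tarrow i v w) ->
  (\rank (mapQ (pushdown S c1) i) < size (snks S))%N.
Proof.
case=> w win H; rewrite -mxrank_tr.
have iw : (index w (snks S) < size (snks S))%N by rewrite index_mem.
apply: (@zero_row_rank _ _ _ _ (Ordinal iw)) => q.
rewrite mxE pushE /= nth_index // (negbTE (H _ _)) //; exact: mem_nth.
Qed.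
End Tree.


Section Constr.
Variable N : nat.
Hypothesis HN : (2 <= N)%N.
Variable sg : 'I_N.+1 -> 'I_N.+1.
Hypothesis sg_inj : injective sg.

Definition L (a : nat) : 'I_N.+1 := sg (inord a).
Lemma L_inj a b : (a <= N)%N -> (b <= N)%N -> L a = L b -> a = b.
Proof.
move=> ha hb /sg_inj /(congr1 (@nat_of_ord _)); rewrite !inordK //.
Qed.

Definition letter a := L (a %% 2).
Definition p a := map letter (iota 0 a).

Lemma size_p a : size (p a) = a.
Proof. by rewrite size_map size_iota. Qed.

Lemma p_rcons a : p a.+1 = rcons (p a) (letter a).
Proof. by rewrite /p -[a.+1]addn1 iotaD map_cat cats1. Qed.

Lemma p_inj a b : p a = p b -> a = b.
Proof. by move/(congr1 size); rewrite !size_p. Qed.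

Lemma mod2_le a : (a %% 2 <= N)%N.
Proof. have := ltn_pmod a (isT : (0 < 2)%N); lia. Qed.

Lemma letter_neq a : letter a != letter a.+1.
Proof.
apply/eqP=> /L_inj; rewrite !mod2_le => /(_ isT isT).
rewrite !modn2 /=; by case: odd.
Qed.

Lemma letter_neqL a l : (2 <= l <= N)%N -> letter a != L l.
Proof.
case/andP=> h1 h2; apply/eqP=> /L_inj; rewrite mod2_le => /(_ isT h2).
have := ltn_pmod a (isT : (0 < 2)%N); lia.
Qed.

Lemma red_p a : reduced (p a).
Proof.
elim: a => [|[|a] IH] //; rewrite p_rcons p_rcons in IH *.
by rewrite [p a.+1]p_rcons reduced_rcons2 IH letter_neq.
Qed.

Lemma red_leaf a l : (2 <= l <= N)%N -> reduced (rcons (p a) (L l)).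
Proof.
case: a => [|a] hl //; rewrite p_rcons reduced_rcons2 -p_rcons red_p /=.
exact: letter_neqL.
Qed.

Lemma tsource_p a : tsource (p a) = ~~ odd a.
Proof. by rewrite /tsource size_p. Qed.
Lemma tsink_p a : tsink (p a) = odd a.
Proof. by rewrite /tsink size_p. Qed.

Lemma arrow_even a : ~~ odd a -> tarrow (letter a) (p a) (p a.+1).
Proof. by move=> ha; rewrite /tarrow !red_p tsource_p ha p_rcons eqxx. Qed.
Lemma arrow_odd a : odd a -> tarrow (letter a) (p a.+1) (p a).
Proof.
by move=> ha; rewrite /tarrow !red_p tsink_p ha p_rcons eqxx orbT.
Qed.
Lemma arrow_leaf_even a l : (2 <= l <= N)%N -> ~~ odd a ->
  tarrow (L l) (p a) (rcons (p a) (L l)).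
Proof.
by move=> hl ha; rewrite /tarrow red_p red_leaf // tsource_p ha eqxx.
Qed.
Lemma arrow_leaf_odd a l : (2 <= l <= N)%N -> odd a ->
  tarrow (L l) (rcons (p a) (L l)) (p a).
Proof.
by move=> hl ha; rewrite /tarrow red_p red_leaf // tsink_p ha eqxx orbT.
Qed.

Lemma leaf_not_p a b l : (2 <= l <= N)%N -> rcons (p b) (L l) != p a.
Proof.
move=> hl; apply/eqP=> e.
have ea : a = b.+1 by move: (congr1 size e); rewrite size_rcons !size_p.
rewrite ea p_rcons in e; have := congr1 snd (rcons_inj e); move=> /= /eqP.
by rewrite eq_sym (negbTE (letter_neqL _ hl)).
Qed.

Lemma leaf_inj b b' l l' : (l <= N)%N -> (l' <= N)%N ->
  rcons (p b) (L l) = rcons (p b') (L l') -> b = b' /\ l = l'.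
Proof.
move=> h h' e; case: (rcons_inj e) => /p_inj -> /L_inj; by auto.
Qed.


Section Tr.
Variables s K sb m r : nat.
Hypothesis Hm : (0 < m)%N.
Hypothesis HK : (0 < K)%N.
Hypothesis Hsb : (s <= sb)%N.
Hypothesis Hrange : (sb + 2 * m.-1 < s + K)%N.
Hypothesis Hr : (r <= (N - 1) * m)%N.

Definition bt t := (sb + 2 * (t %% m))%N.
Definition lt t := (2 + t %/ m)%N.
Definition leaf t := rcons (p (bt t)) (L (lt t)).
Definition spine := map p (iota s K).
Definition leaves := map leaf (iota 0 r).
Definition tree := spine ++ leaves.

Lemma lt_ok t : (t < r)%N -> (2 <= lt t <= N)%N.
Proof.
move=> ht; rewrite /lt leq_addr /=.
have : (t %/ m < N - 1)%N by rewrite ltn_divLR //; apply: leq_trans Hr.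
lia.
Qed.

Lemma bt_range t : (s <= bt t < s + K)%N.
Proof.
rewrite /bt; have := ltn_pmod t Hm; lia.
Qed.

Lemma leaf_inj_t t t' : (t < r)%N -> (t' < r)%N -> leaf t = leaf t' -> t = t'.
Proof.
move=> ht ht' /leaf_inj [].
- by case/andP: (lt_ok ht).
- by case/andP: (lt_ok ht').
rewrite /bt /lt => e1 e2.
have e3 : (t %% m = t' %% m)%N by lia.
have e4 : (t %/ m = t' %/ m)%N by lia.
by rewrite (div.divn_eq t m) (div.divn_eq t' m) e3 e4.
Qed.

Lemma tree_ok : thin_ok tree.
Proof.
apply/andP; split.
  rewrite cat_uniq; apply/and3P; split.
  - by rewrite map_inj_uniq ?iota_uniq //; exact: p_inj.
  - apply/hasPn => v /mapP [t ht ->]; apply/mapP => [[a _ e]].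
    move: ht; rewrite mem_iota /= => ht.
    by move/eqP: e; rewrite /leaf (negbTE (leaf_not_p _ _ (lt_ok ht))).
  - rewrite map_inj_in_uniq ?iota_uniq // => t t'.
    rewrite !mem_iota /=; exact: leaf_inj_t.
rewrite all_cat; apply/andP; split; apply/allP => v /mapP [t ht ->].
  exact: red_p.
by move: ht; rewrite mem_iota /= => ht; apply: red_leaf; apply: lt_ok.
Qed.

Variable k : fieldType.

Lemma tree_indec : thin_indec tree (@c1 N.+1 k).
Proof.
split.
  by rewrite /tree /spine; case: K HK.
move=> f endo idem.
have endo' : forall i v w, v \in tree -> w \in tree -> tarrow i v w -> f w = f v.
  by move=> i v w hv hw t; have := endo i v w hv hw t; rewrite /c1 mulr1 mul1r.
have inS : forall a, (s <= a < s + K)%N -> p a \in tree.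
  by move=> a ha; rewrite mem_cat; apply/orP; left; apply: map_f; rewrite mem_iota.
have inL : forall t, (t < r)%N -> leaf t \in tree.
  by move=> t ht; rewrite mem_cat; apply/orP; right; apply: map_f; rewrite mem_iota.
have spc : forall d, (d < K)%N -> f (p (s + d)) = f (p s).
  elim=> [|d IH] hd; first by rewrite addn0.
  rewrite -IH; last by lia.
  rewrite addnS; case o: (odd (s + d)).
  - apply: esym; apply: (endo' (letter (s + d))); [apply: inS; lia|apply: inS; lia|exact: arrow_odd].
  - apply: (endo' (letter (s + d))); [apply: inS; lia|apply: inS; lia|].
    by apply: arrow_even; rewrite o.
have all_eq : forall v, v \in tree -> f v = f (p s).
  move=> v; rewrite mem_cat => /orP [] /mapP [x hx ->]; move: hx; rewrite mem_iota.
  - move=> hx; rewrite -(subnKC (proj1 (andP hx))); apply: spc; lia.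
  - move=> /= hx; have hb := bt_range x.
    have -> : f (leaf x) = f (p (bt x)).
      case o: (odd (bt x)).
      - apply: esym; apply: (endo' (L (lt x))); [exact: inL|apply: inS; lia|].
        by apply: arrow_leaf_odd => //; apply: lt_ok.
      - apply: (endo' (L (lt x))); [apply: inS; lia|exact: inL|].
        by apply: arrow_leaf_even; [apply: lt_ok|rewrite o].
    rewrite -(subnKC (proj1 (andP hb))); apply: spc; lia.
have ps : p s \in tree by apply: inS; lia.
have h0 := idem _ ps.
have : f (p s) * (f (p s) - 1) == 0 by rewrite mulrBr mulr1 h0 subrr.
rewrite mulf_eq0 subr_eq0 => /orP [] /eqP h.
- by left => v hv; rewrite all_eq.
- by right => v hv; rewrite all_eq.
Qed.
End Tr.
End Constr.


Lemma arith_dec x q k : (0 < x)%N -> (k < x)%N ->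
  ((q * x + k) %/ x = q /\ (q * x + k) %% x = k)%N.
Proof.
move=> hx hk; split; first by rewrite divnMDl // divn_small // addn0.
by rewrite modnMDl modn_small.
Qed.

Lemma arith1 x r t : (0 < x)%N -> (t < r)%N -> (t %% x = x.-1)%N ->
  (t %/ x < r %/ x)%N.
Proof.
move=> hx ht hm; have e := div.divn_eq t x.
suff : ((t %/ x).+1 <= r %/ x)%N by []. rewrite leq_divRL // mulSn; lia.
Qed.

Lemma arith2 x r i k : (0 < x)%N -> (k < x)%N -> (2 <= i)%N ->
  (i < 2 + r %/ x)%N -> ((i - 2) * x + k < r)%N.
Proof.
move=> hx hk hi hr.
have : ((i - 2).+1 <= r %/ x)%N by lia.
rewrite leq_divRL // mulSn; lia.
Qed.

Lemma count_even_iota s k :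
  (count odd (iota s (2 * k)) = k /\ count (fun a => ~~ odd a) (iota s (2 * k)) = k)%N.
Proof.
elim: k => [|k [IH1 IH2]] //.
rewrite mulnS addnC iotaD !count_cat IH1 IH2 /=.
case: (odd (s + 2 * k)) => /=; lia.
Qed.

Lemma even_dec a : ~~ odd a -> exists k, a = (2 * k)%N.
Proof.
move=> h; exists a./2; have := odd_double_half a; rewrite (negbTE h) -muln2; lia.
Qed.
Lemma odd_dec a : odd a -> exists k, a = (2 * k).+1.
Proof.
move=> h; exists a./2; have := odd_double_half a; rewrite h -muln2; lia.
Qed.

Lemma letter_even N (sg : 'I_N.+1 -> 'I_N.+1) a : ~~ odd a -> letter sg a = L sg 0.
Proof. by move=> h; rewrite /letter modn2 (negbTE h). Qed.
Lemma letter_odd N (sg : 'I_N.+1 -> 'I_N.+1) a : odd a -> letter sg a = L sg 1.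
Proof. by move=> h; rewrite /letter modn2 h. Qed.

Lemma odd2 k : odd (2 * k) = false.
Proof. by rewrite oddM. Qed.

Section CaseI.
Variable N : nat.
Hypothesis HN : (2 <= N)%N.
Variable sg : 'I_N.+1 -> 'I_N.+1.
Hypothesis sg_inj : injective sg.
Variables x y : nat.
Hypothesis hx : (0 < x)%N.
Hypothesis hxy : (x < y)%N.
Hypothesis hyN : (y <= N * x)%N.

Let r := (y - x - 1)%N.
Let TI := tree sg 1 (2 * x).+1 2 x r.
Let Hr : (r <= (N - 1) * x)%N.
Proof. rewrite /r mulnBl mul1n; lia. Qed.
Let HR : (2 + 2 * x.-1 < 1 + (2 * x).+1)%N.
Proof. lia. Qed.

Lemma TI_ok : thin_ok TI.
Proof. exact: (tree_ok HN sg_inj hx (ltn0Sn _) (isT : (1 <= 2)%N) HR Hr). Qed.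

Lemma TI_uniq : uniq TI.
Proof. by case/andP: TI_ok. Qed.

Lemma TI_indec (k : fieldType) : thin_indec TI (@c1 N.+1 k).
Proof. exact: (tree_indec HN sg_inj hx (ltn0Sn _) (isT : (1 <= 2)%N) HR Hr). Qed.

Lemma tsource_leaf sb m t : tsource (leaf sg sb m t) = odd sb.
Proof.
by rewrite /tsource /leaf size_rcons size_p /bt /= oddD oddM /= addbF negbK.
Qed.

Lemma TI_srcs : size (srcs TI) = x.
Proof.
rewrite /srcs size_filter /TI /tree count_cat /spine /leaves !count_map.
rewrite (eq_count (a2 := fun a => ~~ odd a)); last by move=> a /=; rewrite tsource_p.
rewrite (eq_count (a1 := preim (leaf sg 2 x) (@tsource N.+1)) (a2 := pred0)); last by move=> a /=; rewrite tsource_leaf.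
rewrite count_pred0 addn0 -[(2 * x).+1]addn1 iotaD count_cat /=.
have [_ ->] := count_even_iota 1 x; rewrite oddD oddM /=; lia.
Qed.

Lemma TI_snks : size (snks TI) = y.
Proof.
rewrite /snks size_filter /TI /tree count_cat /spine /leaves !count_map.
rewrite (eq_count (a2 := odd)); last by move=> a /=; rewrite tsink_p.
rewrite (eq_count (a1 := preim (leaf sg 2 x) (@tsink N.+1)) (a2 := predT)); last first.
  by move=> a /=; rewrite /tsink -[odd _]negbK -/(tsource _) tsource_leaf.
rewrite count_predT size_iota -[(2 * x).+1]addn1 iotaD count_cat /=.
have [-> _] := count_even_iota 1 x; rewrite oddD oddM /= /r; lia.
Qed.

Variable k : fieldType.

Lemma TI_full l : (l <= N)%N ->
  (\rank (mapQ (pushdown TI (@c1 N.+1 k)) (L sg l)) == x) = (l < 2 + r %/ x)%N.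
Proof.
move=> lN; case: (ltnP l (2 + r %/ x)) => hl.
  rewrite (rowfull_rank _ TI_uniq) ?TI_srcs ?eqxx // => v.
  rewrite mem_filter => /andP [sv]; rewrite mem_cat => /orP [] /mapP [a ha ev]; subst v;
    last first.
    by move: sv; rewrite tsource_leaf.
  move: ha sv; rewrite mem_iota tsource_p => /andP [ha1 ha2] /even_dec [k' ek'].
  have hk' : (0 < k' <= x)%N by lia.
  have inS : forall b, (1 <= b <= (2 * x).+1)%N -> p sg b \in TI.
    by move=> b hb; rewrite mem_cat; apply/orP; left; apply: map_f; rewrite mem_iota; lia.
  case: l lN hl => [|[|l]] lN hl.
  - exists (p sg a.+1); first by rewrite mem_filter tsink_p ek' /= odd2 /= inS //; lia.
    rewrite -(letter_even sg (_ : ~~ odd a)); last by rewrite ek' odd2.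
    by apply: (arrow_even HN sg_inj); rewrite ek' odd2.
  - have ea : a = ((2 * k').-1).+1 by lia.
    have oa : odd (2 * k').-1 by rewrite -subn1 oddB ?odd2 //; lia.
    exists (p sg (2 * k').-1); first by rewrite mem_filter tsink_p oa /= inS //; lia.
    rewrite ea -(letter_odd sg oa).
    exact: (arrow_odd HN sg_inj).
  - have hk2 : (k'.-1 < x)%N by lia.
    set t := ((l.+2 - 2) * x + k'.-1)%N.
    have [dt mt] := arith_dec (l.+2 - 2) hx hk2.
    have ht : (t < r)%N by apply: arith2.
    exists (leaf sg 2 x t).
      rewrite mem_filter /tsink -[odd _]negbK -/(tsource _) tsource_leaf /=.
      by rewrite mem_cat; apply/orP; right; apply: map_f; rewrite mem_iota.
    rewrite /leaf /bt /lt mt dt.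
    have -> : (2 + (l.+2 - 2) = l.+2)%N by lia.
    have -> : (2 + 2 * k'.-1 = a)%N by lia.
    apply: (arrow_leaf_even HN sg_inj); first by rewrite lN.
    by rewrite ek' odd2.
apply/negbTE; rewrite neq_ltn; apply/orP; left.
rewrite -TI_srcs; apply: rownotfull_rank.
have l2 : (2 <= l)%N by apply: leq_trans hl; rewrite leq_addr.
have hl2 : (2 <= l <= N)%N by rewrite l2 lN.
exists (p sg (2 * x)).
  rewrite mem_filter tsource_p odd2 /= mem_cat; apply/orP; left.
  by apply: map_f; rewrite mem_iota; lia.
move=> w; rewrite mem_filter => /andP [_ win]; apply/negP => /tarrowE [_ _ [[_ e]|[_ e]]].
- move: win; rewrite mem_cat e => /orP [] /mapP [b hb eb].
  + by move: (leaf_not_p HN sg_inj b (2 * x) hl2); rewrite eb eqxx.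
  + have [] := leaf_inj sg_inj _ _ eb.
    * by rewrite lN.
    * move: hb; rewrite mem_iota /= => hb; have := @lt_ok N HN 1 (2*x).+1 2 x r hx (ltn0Sn _) (isT : (1 <= 2)%N) HR Hr _ hb; rewrite /lt; lia.
    move: hb; rewrite mem_iota /= /bt /lt => hb e1 e2.
    have := arith1 hx hb (_ : (b %% x = x.-1)%N); lia.
- have e2 : p sg (2 * x) = rcons (p sg (2 * x).-1) (L sg 1).
    have -> : (2 * x = ((2 * x).-1).+1)%N by lia.
    by rewrite p_rcons letter_odd //= -subn1 oddB ?odd2 //; lia.
  rewrite e2 in e; case: (rcons_inj e) => _ /(L_inj sg_inj) h.
  have := h (leq_trans (isT : (1 <= 2)%N) HN) lN; lia.
Qed.
End CaseI.

Section CaseII.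
Variable N : nat.
Hypothesis HN : (2 <= N)%N.
Variable sg : 'I_N.+1 -> 'I_N.+1.
Hypothesis sg_inj : injective sg.
Variables x y : nat.
Hypothesis hy : (0 < y)%N.
Hypothesis hxy : (y <= x)%N.
Hypothesis hxN : (x < N * y)%N.

Let r := (x - y - 1)%N.
Let e := (y < x)%N.
Let K := (2 * y + e)%N.
Let T := tree sg 0 K 1 y r.
Let Hr : (r <= (N - 1) * y)%N.
Proof. rewrite /r mulnBl mul1n; lia. Qed.
Let HR : (1 + 2 * y.-1 < 0 + K)%N.
Proof. rewrite /K; lia. Qed.
Let HK : (0 < K)%N.
Proof. rewrite /K; lia. Qed.

Lemma TII_ok : thin_ok T.
Proof. exact: (tree_ok HN sg_inj hy HK (isT : (0 <= 1)%N) HR Hr). Qed.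

Lemma TII_uniq : uniq T.
Proof. by case/andP: TII_ok. Qed.

Lemma TII_indec (k : fieldType) : thin_indec T (@c1 N.+1 k).
Proof. exact: (tree_indec HN sg_inj hy HK (isT : (0 <= 1)%N) HR Hr). Qed.

Lemma TII_srcs : size (srcs T) = x.
Proof.
rewrite /srcs size_filter /T /tree count_cat /spine /leaves !count_map.
rewrite (eq_count (a2 := fun a => ~~ odd a)); last by move=> a /=; rewrite tsource_p.
rewrite (eq_count (a1 := preim (leaf sg 1 y) (@tsource N.+1)) (a2 := predT)); last by move=> a /=; rewrite tsource_leaf.
rewrite count_predT size_iota /K iotaD count_cat.
have [_ ->] := count_even_iota 0 y.
rewrite /e /r; case: (ltnP y x) => h /=; rewrite ?odd2 /=; lia.
Qed.

Lemma TII_snks : size (snks T) = y.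
Proof.
rewrite /snks size_filter /T /tree count_cat /spine /leaves !count_map.
rewrite (eq_count (a2 := odd)); last by move=> a /=; rewrite tsink_p.
rewrite (eq_count (a1 := preim (leaf sg 1 y) (@tsink N.+1)) (a2 := pred0)); last first.
  by move=> a /=; rewrite /tsink -[odd _]negbK -/(tsource _) tsource_leaf.
rewrite count_pred0 /K iotaD count_cat.
have [-> _] := count_even_iota 0 y.
rewrite /e; case: (ltnP y x) => h /=; rewrite ?odd2 /=; lia.
Qed.

Variable k : fieldType.
Let a := if (y < x)%N then (2 + r %/ y)%N else 1%N.

Lemma TII_full l : (l <= N)%N ->
  (\rank (mapQ (pushdown T (@c1 N.+1 k)) (L sg l)) == y) = (l < a)%N.
Proof.
move=> lN; case: (ltnP l a) => hl.
  rewrite (colfull_rank _ TII_uniq) ?TII_snks ?eqxx // => w.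
  rewrite mem_filter => /andP [sw]; rewrite mem_cat => /orP [] /mapP [b hb ew]; subst w;
    last first.
    by move: sw; rewrite /tsink -[odd _]negbK -/(tsource _) tsource_leaf.
  move: hb sw; rewrite mem_iota tsink_p => /andP [hb1 hb2] /odd_dec [k' ek'].
  have hk' : (k' < y)%N by move: hb2; rewrite /K /e; case: (y < x)%N => /=; lia.
  have inS : forall b, (b < K)%N -> p sg b \in T.
    by move=> c hc; rewrite mem_cat; apply/orP; left; apply: map_f; rewrite mem_iota; lia.
  case: l lN hl => [|[|l]] lN hl.
  - exists (p sg (2 * k')); first by rewrite mem_filter tsource_p odd2 /= inS //; lia.
    rewrite ek' -(letter_even sg (_ : ~~ odd (2 * k'))); last by rewrite odd2.
    by apply: (arrow_even HN sg_inj); rewrite odd2.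
  - have ex : (y < x)%N by move: hl; rewrite /a; case: (y < x)%N.
    exists (p sg (2 * k').+2).
      rewrite mem_filter tsource_p /= odd2 /= inS // /K /e ex; lia.
    rewrite ek' -(letter_odd sg (_ : odd (2 * k').+1)); last by rewrite /= odd2.
    by apply: (arrow_odd HN sg_inj); rewrite /= odd2.
  - have ex : (y < x)%N by move: hl; rewrite /a; case: (y < x)%N.
    move: hl; rewrite /a ex => hl.
    set t := ((l.+2 - 2) * y + k')%N.
    have [dt mt] := arith_dec (l.+2 - 2) hy hk'.
    have ht : (t < r)%N by apply: arith2.
    exists (leaf sg 1 y t).
      rewrite mem_filter tsource_leaf /=.
      by rewrite mem_cat; apply/orP; right; apply: map_f; rewrite mem_iota.
    rewrite /leaf /bt /lt mt dt.
    have -> : (2 + (l.+2 - 2) = l.+2)%N by lia.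
    have -> : (1 + 2 * k' = b)%N by lia.
    apply: (arrow_leaf_odd HN sg_inj); first by rewrite lN.
    by rewrite ek' /= odd2.
apply/negbTE; rewrite neq_ltn; apply/orP; left.
rewrite -TII_snks; apply: colnotfull_rank.
have a1 : (1 <= a)%N by rewrite /a; case: (y < x)%N.
have inS : forall b, (b < K)%N -> p sg b \in T.
  by move=> c hc; rewrite mem_cat; apply/orP; left; apply: map_f; rewrite mem_iota; lia.
have oy : odd (2 * y).-1 by rewrite -subn1 oddB ?odd2 //; lia.
exists (p sg (2 * y).-1).
  by rewrite mem_filter tsink_p oy /= inS // /K; lia.
move=> v; rewrite mem_filter => /andP [_ vin]; apply/negP => /tarrowE [_ _ [[_ e']|[_ e']]].
- have e2 : p sg (2 * y).-1 = rcons (p sg (2 * y).-2) (L sg 0).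
    have -> : ((2 * y).-1 = ((2 * y).-2).+1)%N by lia.
    by rewrite p_rcons letter_even // -subn2 oddB ?odd2 //; lia.
  rewrite e2 in e'; case: (rcons_inj e') => _ /(L_inj sg_inj) h.
  have := h (leq0n _) lN; lia.
- move: vin; rewrite mem_cat e' => /orP [] /mapP [b hb eb].
  + move: e' eb; case: l lN hl => [|[|l]] lN hl e' eb; first by lia.
    * have ny : ~~ (y < x)%N by move: hl; rewrite /a; case: (y < x)%N.
      have : p sg (2 * y) = p sg b by rewrite -eb -[(2 * y)%N]prednK ?p_rcons ?letter_odd //; lia.
      move/p_inj => eb'; move: hb; rewrite mem_iota /K /e (negbTE ny) -eb'; lia.
    * have hl2 : (2 <= l.+2 <= N)%N by rewrite lN.
      by move: (leaf_not_p HN sg_inj b (2 * y).-1 hl2); rewrite eb eqxx.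
  + move: hb; rewrite mem_iota /= => hb.
    have ex : (y < x)%N by move: hb; rewrite /r; lia.
    move: hl; rewrite /a ex => hl.
    have [] := leaf_inj sg_inj _ _ eb.
    * by [].
    * have := @lt_ok N HN 0 K 1 y r hy HK (isT : (0 <= 1)%N) HR Hr _ hb; rewrite /lt; lia.
    rewrite /bt /lt => e1 e2.
    have := arith1 hy hb (_ : (b %% y = y.-1)%N); lia.
Qed.
End CaseII.


Definition sh N (j i : 'I_N.+1) : 'I_N.+1 :=
  inord (if (i + j < N.+1)%N then (i + j)%N else (i + j - N.+1)%N).

Lemma sh_val N (j i : 'I_N.+1) :
  val (sh j i) = if (i + j < N.+1)%N then (i + j)%N else (i + j - N.+1)%N.
Proof.
rewrite /sh /= inordK //; case: ifP => //; have := ltn_ord i; have := ltn_ord j; lia.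
Qed.

Lemma sh_inj N (j : 'I_N.+1) : injective (sh j).
Proof.
move=> i i' /(congr1 val); rewrite !sh_val => h; apply: val_inj => /=.
have := ltn_ord i; have := ltn_ord i'; have := ltn_ord j.
move: h; do 2 case: ifP; lia.
Qed.

Definition Tfam N x y (j : 'I_N.+1) :=
  if (x < y)%N then tree (sh j) 1 (2 * x).+1 2 x (y - x - 1)
  else tree (sh j) 0 (2 * y + (y < x)) 1 y (x - y - 1).

Definition afam x y :=
  if (x < y)%N then (2 + (y - x - 1) %/ x)%N
  else if (y < x)%N then (2 + (x - y - 1) %/ y)%N else 1%N.

Lemma key (k : fieldType) N x y (j : 'I_N.+1) :
  (2 <= N)%N -> (0 < x)%N -> (0 < y)%N -> (x < N * y)%N -> (y <= N * x)%N ->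
  let M := pushdown (Tfam x y j) (@c1 N.+1 k) in
  [/\ d1 M = x, d2 M = y, cover_thin M &
    forall l, (l <= N)%N ->
      (\rank (mapQ M (L (sh j) l)) == minn x y) = (l < afam x y)%N].
Proof.
move=> HN hx hy h1 h2 M.
have sinj := @sh_inj N j.
rewrite /M /Tfam /afam; case: ifP => hxy.
  split.
  - exact: TI_srcs.
  - exact: TI_snks.
  - exists (tree (sh j) 1 (2 * x).+1 2 x (y - x - 1)), (@c1 N.+1 k); split.
    + exact: TI_ok.
    + exact: TI_indec.
    + exact: kQiso_refl.
  - move=> l lN; have -> : minn x y = x by apply/minn_idPl; lia.
    exact: TI_full.
have hyx : (y <= x)%N by rewrite leqNgt hxy.
split.
- exact: TII_srcs.
- exact: TII_snks.
- exists (tree (sh j) 0 (2 * y + (y < x)) 1 y (x - y - 1)), (@c1 N.+1 k); split.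
  + exact: TII_ok.
  + exact: TII_indec.
  + exact: kQiso_refl.
- move=> l lN; have -> : minn x y = y by apply/minn_idPr.
  exact: TII_full.
Qed.

Lemma aux_lt N x z : (2 <= N)%N -> (0 < x)%N -> (z <= N * x)%N -> (z - x - 1 < (N - 1) * x)%N.
Proof.
case: N => [|[|N]] // _ hx; rewrite mulSn subn1 /= mulSn; lia.
Qed.

Lemma afam_bounds N x y : (2 <= N)%N -> (0 < x)%N -> (0 < y)%N -> (x < N * y)%N -> (y <= N * x)%N ->
  (1 <= afam x y <= N)%N.
Proof.
move=> HN hx hy h1 h2; rewrite /afam; case: ifP => hxy.
  have : ((y - x - 1) %/ x < N - 1)%N by rewrite ltn_divLR //; apply: aux_lt.
  move: ((y - x - 1) %/ x)%N => q hq; lia.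
case: ifP => hyx; last by lia.
have : ((x - y - 1) %/ y < N - 1)%N by rewrite ltn_divLR //; apply: aux_lt => //; exact: ltnW.
move: ((x - y - 1) %/ y)%N => q hq; lia.
Qed.

Local Close Scope ring_scope.

Theorem corollary1p2 (k : fieldType) (n : nat) (x y : nat) :
  (2 <= n)%N -> (0 < x)%N -> (0 < y)%N ->
  (x < (n - 1) * y)%N -> (y <= (n - 1) * x)%N ->
  exists N : 'I_n -> kQmod k n,
    (forall j, [/\ d1 (N j) = x, d2 (N j) = y & cover_thin (N j)]) /\
    (forall j j', j != j' -> ~ kQiso (N j) (N j')).
Proof.
case: n => [|N] //; rewrite subn1 /= => hn hx hy h1 h2.
have HN : (2 <= N)%N.
  case: N hn h1 h2 {k} => [|[|N]] //; rewrite !mul1n; lia.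
exists (fun j => pushdown (Tfam x y j) (@c1 N.+1 k)); split.
  by move=> j; have [? ? ? _] := key k j HN hx hy h1 h2.
move=> j j' nj iso.
have [_ _ _ F] := key k j HN hx hy h1 h2.
have [_ _ _ F'] := key k j' HN hx hy h1 h2.
have [a1 aN] := andP (afam_bounds HN hx hy h1 h2).
set d := if (j' <= j)%N then (j - j')%N else (j + N.+1 - j')%N.
have hj := ltn_ord j; have hj' := ltn_ord j'.
have jj : (j : nat) <> j' by move=> e; move/eqP: nj; apply; apply: val_inj.
have dN : (d <= N)%N by rewrite /d; case: ifP; lia.
have d1 : (1 <= d)%N by rewrite /d; case: ifP; lia.
have v0 : (inord 0 : 'I_N.+1) = 0%N :> nat by rewrite inordK.
have vN : (inord N : 'I_N.+1) = N :> nat by rewrite inordK.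
have vd : (inord d : 'I_N.+1) = d :> nat by rewrite inordK // ltnS.
have vd1 : (inord d.-1 : 'I_N.+1) = d.-1 :> nat by rewrite inordK // ltnS; lia.
have E1 : L (sh j) 0 = L (sh j') d.
  apply: val_inj; rewrite /L /= !sh_val v0 vd.
  by move: dN d1; rewrite /d; repeat case: ifP; lia.
have E2 : L (sh j) N = L (sh j') d.-1.
  apply: val_inj; rewrite /L /= !sh_val vN vd1.
  by move: dN d1; rewrite /d; repeat case: ifP; lia.
have R1 := kQiso_rank (L (sh j) 0) iso.
have R2 := kQiso_rank (L (sh j) N) iso.
have := F 0%N (leq0n _); rewrite R1 E1 F' // => hd.
have := F N (leqnn _); rewrite R2 E2 F' //; last by lia.
move: hd; lia.
Qed.
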